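(* For every combinatorial auction with single-dimensional signals $s_i\in\{0,1,\dots,k-1\}$ ($k\ge2$ a power of $2$) and strong-SOS valuations, the mechanism $k$-SS is universally ex-post IC-IR and gives a $(2\log_2k+4)$-approximation to the optimal social welfare.
   Context: Setting: $n$ agents, $m$ items; agent $i$ has private signal $s_i$; value for bundle $T$ is $v_{iT}(\mathbf{s})\ge0$, public, weakly increasing in each coordinate, strictly in $s_i$. Strong-SOS: for every $j$, $\delta\ge0$, and profiles $\mathbf{s}'\le\mathbf{s}$ coordinate-wise, $v(\mathbf{s}'_{-j},s'_j+\delta)-v(\mathbf{s}'_{-j},s'_j)\ge v(\mathbf{s}_{-j},s_j+\delta)-v(\mathbf{s}_{-j},s_j)$; every $v_{iT}$ is strong-SOS. Allocations assign disjoint bundles. Random Bucket: choose $\ell$ uniformly in $\{1,\dots,\log_2k\}$; $N_{B_\ell}=\{i:s_i\ge2^{\ell-1}\}$; for $i\in N_{B_\ell}$, $\bar v_{iT}=v_{iT}(\mathbf{s}_{N_{\neg B_\ell}},\mathbf{2^{\ell-1}}_{N_{B_\ell}})$, else $0$; allocate a $\bar v$-welfare-maximizing allocation among $N_{B_\ell}$; agent receiving $\bar T_i$ pays $v_{i\bar T_i}(\mathbf{s}_{-i},2^{\ell-1}-1)$. Random Sampling: split agents uniformly at random into $A,B$; for $i\in B$, $\tilde v_{iT}=v_{iT}(\mathbf{s}_A,\mathbf{0}_B)$, for $i\in A$, $\tilde v_{iT}=0$; allocate a $\tilde v$-welfare-maximizing allocation among $B$; no payments. $k$-SS: run Random Bucket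 with probability $\frac{\log_2k}{\log_2k+2}$, otherwise Random Sampling. *)

(* Defs.v *)
From HB Require Import structures.
From mathcomp Require Import all_boot all_order all_algebra.
From Stdlib Require List.
Set Implicit Arguments. Unset Strict Implicit. Unset Printing Implicit Defensive.
Import Order.TTheory GRing.Theory Num.Theory.
Local Open Scope ring_scope.

Definition profile (I : finType) := {ffun I -> nat}.

Definition upd (I : finType) (s : profile I) (j : I) (x : nat) : profile I :=
  [ffun i => if i == j then x else s i].

Definition in_range (I : finType) (k : nat) (s : profile I) : bool :=
  [forall i, (s i < k)%N].

Definition valuations (I M : finType) (R : realFieldType) :=
  I -> {set M} -> profile I -> R.

(* Standing assumptions on the (public) valuations, for signals in {0..k-1}:
   normalized on the empty bundle, nonnegative, weakly increasing in every
   coordinate, strictly increasing in the own signal (for nonempty bundles),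
   and strong-SOS. *)
Definition valid_valuations (I M : finType) (R : realFieldType) (k : nat)
    (v : valuations I M R) : Prop :=
  [/\ (forall i s, v i set0 s = 0),
      (forall i T s, in_range k s -> 0 <= v i T s),
      (forall i T s j x y, in_range k s -> (x <= y)%N -> (y < k)%N ->
          v i T (upd s j x) <= v i T (upd s j y)),
      (forall i T s x y, T != set0 -> in_range k s -> (x < y)%N -> (y < k)%N ->
          v i T (upd s i x) < v i T (upd s i y))
    & (forall i T j d (s' s : profile I), in_range k s ->
          (forall l, (s' l <= s l)%N) -> (s j + d < k)%N ->
          v i T (upd s j (s j + d)) - v i T s
            <= v i T (upd s' j (s' j + d)) - v i T s')].

Definition allocation (I M : finType) := {ffun I -> {set M}}.

Definition feasible (I M : finType) (A : allocation I M) : Prop :=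
  forall i j, i != j -> [disjoint A i & A j].

Definition supported_on (I M : finType) (S : {set I}) (A : allocation I M) : Prop :=
  forall i, i \notin S -> A i = set0.

Definition welfare_of (I M : finType) (R : realFieldType)
    (val : I -> {set M} -> R) (A : allocation I M) : R :=
  \sum_i val i (A i).

Definition welfare (I M : finType) (R : realFieldType)
    (v : valuations I M R) (s : profile I) (A : allocation I M) : R :=
  \sum_i v i (A i) s.

Definition welfare_maximizer (I M : finType) (R : realFieldType)
    (sel : {set I} -> (I -> {set M} -> R) -> allocation I M) : Prop :=
  forall S val,
    [/\ feasible (sel S val), supported_on S (sel S val)
      & forall A, feasible A -> supported_on S A ->
          welfare_of val A <= welfare_of val (sel S val)].

Definition mechanism (I M : finType) (R : realFieldType) :=
  profile I -> allocation I M * (I -> R).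

Definition bucket_set (I : finType) (l : nat) (b : profile I) : {set I} :=
  [set i | (2 ^ l.-1 <= b i)%N].

Definition bucket_profile (I : finType) (l : nat) (b : profile I) : profile I :=
  [ffun i => if i \in bucket_set l b then (2 ^ l.-1)%N else b i].

Definition bucket_vals (I M : finType) (R : realFieldType) (v : valuations I M R)
    (l : nat) (b : profile I) : I -> {set M} -> R :=
  fun i T => if i \in bucket_set l b then v i T (bucket_profile l b) else 0.

Definition random_bucket (I M : finType) (R : realFieldType)
    (sel : {set I} -> (I -> {set M} -> R) -> allocation I M)
    (v : valuations I M R) (l : nat) : mechanism I M R :=
  fun b =>
    let A := sel (bucket_set l b) (bucket_vals v l b) in
    (A, fun i => v i (A i) (upd b i (2 ^ l.-1 - 1)%N)).

Definition sample_profile (I : finType) (Aset : {set I}) (b : profile I) : profile I :=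
  [ffun i => if i \in Aset then b i else 0%N].

Definition sample_vals (I M : finType) (R : realFieldType) (v : valuations I M R)
    (Aset : {set I}) (b : profile I) : I -> {set M} -> R :=
  fun i T => if i \in ~: Aset then v i T (sample_profile Aset b) else 0.

Definition random_sampling (I M : finType) (R : realFieldType)
    (sel : {set I} -> (I -> {set M} -> R) -> allocation I M)
    (v : valuations I M R) (Aset : {set I}) : mechanism I M R :=
  fun b => (sel (~: Aset) (sample_vals v Aset b), fun _ => 0).

(* ---------- k-SS with k = 2^K, as a finite distribution over
   deterministic mechanisms (probability, mechanism) ---------- *)
Definition kSS (I M : finType) (R : realFieldType)
    (sel : {set I} -> (I -> {set M} -> R) -> allocation I M)
    (v : valuations I M R) (K : nat) : seq (R * mechanism I M R) :=
  [seq (K%:R / (K + 2)%:R * K%:R^-1, random_bucket sel v l) | l <- iota 1 K]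
  ++ [seq (2%:R / (K + 2)%:R * (2 ^ #|I|)%:R^-1, random_sampling sel v Aset)
       | Aset <- enum [set: {set I}]].

Definition utility (I M : finType) (R : realFieldType) (v : valuations I M R)
    (mech : mechanism I M R) (s : profile I) (i : I) (b : profile I) : R :=
  v i ((mech b).1 i) s - (mech b).2 i.

Definition expost_IC_IR (I M : finType) (R : realFieldType) (k : nat)
    (v : valuations I M R) (mech : mechanism I M R) : Prop :=
  forall s, in_range k s -> forall i,
    0 <= utility v mech s i s /\
    (forall x, (x < k)%N -> utility v mech s i (upd s i x) <= utility v mech s i s).

Definition universally_expost_IC_IR (I M : finType) (R : realFieldType) (k : nat)
    (v : valuations I M R) (D : seq (R * mechanism I M R)) : Prop :=
  forall pm, List.In pm D -> expost_IC_IR k v pm.2.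

Definition expected_welfare (I M : finType) (R : realFieldType)
    (v : valuations I M R) (s : profile I) (D : seq (R * mechanism I M R)) : R :=
  \sum_(pm <- D) pm.1 * welfare v s (pm.2 s).1.

(* Main.v *)
Require Import Defs.
From HB Require Import structures.
From mathcomp Require Import all_boot all_order all_algebra.
From mathcomp Require Import zify ring lra.
From Stdlib Require Import FunctionalExtensionality.
From Stdlib Require List.
Set Implicit Arguments. Unset Strict Implicit. Unset Printing Implicit Defensive.
Import Order.TTheory GRing.Theory Num.Theory.
Local Open Scope ring_scope.

Section Aux.
Variable I : finType.

Definition addp (a c : profile I) : profile I := [ffun j => (a j + c j)%N].
Definition zerop : profile I := [ffun _ => 0%N].

Lemma upd_eq (s : profile I) j x : upd s j x j = x.
Proof. by rewrite ffunE eqxx. Qed.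

Lemma upd_neq (s : profile I) j x l : l != j -> upd s j x l = s l.
Proof. by move=> h; rewrite ffunE (negbTE h). Qed.

Lemma upd_upd (s : profile I) j x y : upd (upd s j x) j y = upd s j y.
Proof. by apply/ffunP=> l; rewrite !ffunE; case: (l == j). Qed.

Lemma upd_id (s : profile I) j : upd s j (s j) = s.
Proof. by apply/ffunP=> l; rewrite !ffunE; case: eqP => // ->. Qed.

Lemma in_rangeP k (s : profile I) : in_range k s <-> forall i, (s i < k)%N.
Proof. by split; [move/forallP | move=> h; apply/forallP]. Qed.

Lemma in_range_le k (p q : profile I) :
  (forall j, (p j <= q j)%N) -> in_range k q -> in_range k p.
Proof.
move=> h /in_rangeP hq; apply/in_rangeP => j.
exact: leq_ltn_trans (h j) (hq j).
Qed.

Lemma in_range_upd k (s : profile I) j x :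
  in_range k s -> (x < k)%N -> in_range k (upd s j x).
Proof.
move=> /in_rangeP h hx; apply/in_rangeP => l; rewrite ffunE.
by case: (l == j).
Qed.

Lemma profile_ind (P : profile I -> Prop) :
  (forall c : profile I, (forall j, c j = 0%N) -> P c) ->
  (forall (c : profile I) j, c j != 0%N -> P (upd c j 0) -> P c) -> forall c, P c.
Proof.
move=> h0 hS.
suff main : forall n (c : profile I), #|[set j | c j != 0%N]| = n -> P c.
  by move=> c; exact: (main _ c erefl).
elim=> [|n IH] c hn.
  apply: h0 => j; apply/eqP; apply: contraT => hj.
  move/eqP: hn; rewrite cards_eq0 => /eqP e.
  have : j \in [set j | c j != 0%N] by rewrite inE.
  by rewrite e inE.
have : (0 < #|[set j | c j != 0%N]|)%N by rewrite hn.
case/card_gt0P => j; rewrite inE => hj.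
apply: (hS _ j hj); apply: IH.
have -> : [set l | upd c j 0 l != 0%N] = [set j | c j != 0%N] :\ j.
  by apply/setP => l; rewrite !inE ffunE; case: (l =P j) => [->|] //=.
rewrite (cardsD1 j) inE hj in hn.
by case: hn.
Qed.

End Aux.

Section Val.
Variables (R : realFieldType) (I M : finType) (k : nat) (v : valuations I M R).
Hypothesis hv : valid_valuations k v.

Lemma v_set0 i s : v i set0 s = 0.
Proof. by case: hv. Qed.

Lemma v_ge0 i T s : in_range k s -> 0 <= v i T s.
Proof. by case: hv => _ h _ _ _; apply: h. Qed.

Lemma addp0 (a c : profile I) : (forall j, c j = 0%N) -> addp a c = a.
Proof. by move=> h; apply/ffunP => j; rewrite ffunE h addn0. Qed.

Lemma addp_upd (a c : profile I) j :
  addp a c = upd (addp a (upd c j 0)) j (addp a (upd c j 0) j + c j).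
Proof.
apply/ffunP => l; rewrite !ffunE; case: (l =P j) => [->|] //.
by rewrite eqxx addn0.
Qed.

Lemma addp_le (a c : profile I) j : (addp a (upd c j 0) j <= addp a c j)%N.
Proof. by rewrite !ffunE eqxx addn0 leq_addr. Qed.

Lemma addp_le_all (a c : profile I) j l : (addp a (upd c j 0) l <= addp a c l)%N.
Proof. rewrite !ffunE; case: (l =P j) => _; [by rewrite leq_add2l | by []]. Qed.

Lemma mono_add i T (c a : profile I) :
  in_range k (addp a c) -> v i T a <= v i T (addp a c).
Proof.
case: hv => _ _ hmono _ _.
elim/profile_ind: c a => [c hc|c j hcj IH] a hr.
  by rewrite addp0.
have hr' : in_range k (addp a (upd c j 0)).
  by apply: in_range_le hr => l; apply: addp_le_all.
apply: le_trans (IH a hr') _.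
rewrite [in X in _ <= X](addp_upd a c j).
set s := addp a (upd c j 0).
rewrite -{1}(upd_id s j).
apply: hmono => //; first by rewrite leq_addr.
move/in_rangeP: hr => /(_ j); rewrite /s !ffunE eqxx addn0 //.
Qed.

Lemma mono_le i T (p q : profile I) :
  (forall j, (p j <= q j)%N) -> in_range k q -> v i T p <= v i T q.
Proof.
move=> hpq hq.
have e : q = addp p [ffun j => (q j - p j)%N].
  by apply/ffunP => j; rewrite !ffunE subnKC.
by rewrite e; apply: mono_add; rewrite -e.
Qed.

Lemma sos_add i T (c a b : profile I) :
  (forall j, (a j <= b j)%N) -> in_range k (addp b c) ->
  v i T (addp b c) - v i T b <= v i T (addp a c) - v i T a.
Proof.
case: hv => _ _ _ _ hsos.
elim/profile_ind: c a b => [c hc|c j hcj IH] a b hab hr.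
  by rewrite !addp0 // !subrr.
have hr' : in_range k (addp b (upd c j 0)).
  by apply: in_range_le hr => l; apply: addp_le_all.
have := IH a b hab hr'.
have h1 : v i T (addp b c) - v i T (addp b (upd c j 0))
   <= v i T (addp a c) - v i T (addp a (upd c j 0)).
  rewrite (addp_upd b c j) (addp_upd a c j).
  apply: hsos => //.
    by move=> l; rewrite !ffunE leq_add2r.
  by move/in_rangeP: hr => /(_ j); rewrite !ffunE eqxx addn0.
lra.
Qed.

End Val.

Section Bucket.
Variables (R : realFieldType) (I M : finType) (k : nat) (v : valuations I M R).
Hypothesis hv : valid_valuations k v.

Lemma bucket_profile_le l (s : profile I) j : (bucket_profile l s j <= s j)%N.
Proof. by rewrite ffunE; case: ifP => //; rewrite inE. Qed.

Lemma bucket_sos i T l (s : profile I) :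
  in_range k s -> (2 ^ l <= s i < 2 ^ l.+1)%N ->
  v i T s - v i T (upd s i 0) <= 2 * v i T (bucket_profile l.+1 s).
Proof.
move=> hs /andP [hl hu].
case: (hv) => _ _ _ _ hsos.
set p := bucket_profile l.+1 s.
set h := (2 ^ l)%N.
have hpi : p i = h by rewrite /p ffunE inE /= hl.
have hp : in_range k p by apply: in_range_le hs => j; apply: bucket_profile_le.
have hpl : forall j, (p j <= s j)%N by move=> j; apply: bucket_profile_le.
have hsk := (proj1 (in_rangeP k s) hs i).
have hhk : (h < k)%N by apply: leq_ltn_trans hl hsk.
rewrite expnS in hu.
set d := (s i - h)%N.
have hd : (d <= h)%N by rewrite /d; lia.
have e1 : (h + d = s i)%N by rewrite /d; lia.
have e2 : (h - d + d = h)%N by lia.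
have ep : upd p i h = p by rewrite -hpi upd_id.
have g1 : v i T s - v i T (upd s i h) <= v i T p - v i T (upd p i (h - d)).
  have := hsos i T i d (upd p i (h - d)) (upd s i h).
  rewrite !upd_eq !upd_upd e1 e2 upd_id ep; apply.
  - by apply: in_range_upd.
  - move=> j; case: (eqVneq j i) => [->|hji]; rewrite ?upd_eq ?upd_neq //; first exact: leq_subr; exact: hpl.
  - by [].
have g2 : v i T (upd s i h) - v i T (upd s i 0) <= v i T p - v i T (upd p i 0).
  have := hsos i T i h (upd p i 0) (upd s i 0).
  rewrite !upd_eq !upd_upd !add0n ep; apply.
  - by apply: in_range_upd; lia.
  - by move=> j; case: (eqVneq j i) => [->|hji]; rewrite ?upd_eq ?upd_neq //; exact: hpl.
  - by [].
have n1 : 0 <= v i T (upd p i (h - d)).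
  by apply: (v_ge0 hv); apply: in_range_upd => //; lia.
have n2 : 0 <= v i T (upd p i 0).
  by apply: (v_ge0 hv); apply: in_range_upd => //; lia.
lra.
Qed.

End Bucket.

Section IC.
Variables (R : realFieldType) (I M : finType) (k : nat) (v : valuations I M R).
Hypothesis hv : valid_valuations k v.
Variable sel : {set I} -> (I -> {set M} -> R) -> allocation I M.
Hypothesis hsel : welfare_maximizer sel.

Lemma sel_out (S : {set I}) (val : I -> {set M} -> R) (i : I) : i \notin S -> sel S val i = set0.
Proof. by case: (hsel S val) => _ h _; apply: h. Qed.

Lemma rb_IC l : (2 ^ l.-1 <= k)%N -> expost_IC_IR k v (random_bucket sel v l).
Proof.
move=> hthr s hs i.
set thr := (2 ^ l.-1)%N.
have thr_pos : (0 < thr)%N by rewrite expn_gt0.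
have hsk := proj1 (in_rangeP k s) hs i.
set A := fun b : profile I => sel (bucket_set l b) (bucket_vals v l b).
have eA : forall x y, (thr <= x)%N -> (thr <= y)%N -> A (upd s i x) = A (upd s i y).
  move=> x y hx hy.
  have eS : bucket_set l (upd s i x) = bucket_set l (upd s i y).
    apply/setP => j; rewrite !inE.
    by case: (eqVneq j i) => [->|hji]; rewrite ?upd_eq ?upd_neq // hx hy.
  have eP : bucket_profile l (upd s i x) = bucket_profile l (upd s i y).
    apply/ffunP => j; rewrite [LHS]ffunE [RHS]ffunE eS; case: ifP => // hj.
    case: (eqVneq j i) => [e|hji]; last by rewrite !upd_neq.
    by move: hj; rewrite e inE upd_eq hy.
  by rewrite /A /bucket_vals eS eP.
have e0 : forall x, (x < thr)%N -> A (upd s i x) i = set0.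
  move=> x hx; apply: sel_out; rewrite inE upd_eq -ltnNge //.
set T := A (upd s i thr) i.
set U := v i T s - v i T (upd s i (thr - 1)).
have hu : forall x, (x < k)%N ->
    utility v (random_bucket sel v l) s i (upd s i x) = if (thr <= x)%N then U else 0.
  move=> x hx; rewrite /utility /= upd_upd.
  case: ifP => hx'.
    by rewrite -/(A _) (eA x thr hx' (leqnn _)).
  by rewrite -/(A _) e0 ?ltnNge ?hx' // !(v_set0 hv) subrr.
have hs' : utility v (random_bucket sel v l) s i s = if (thr <= s i)%N then U else 0.
  by move: (hu (s i) hsk); rewrite upd_id.
have hupd : in_range k (upd s i (thr - 1)).
  apply: in_range_upd => //; lia.
rewrite hs'; split.
  case: ifP => // h; rewrite /U subr_ge0.
  apply: (mono_le hv) => // j.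
  by case: (eqVneq j i) => [->|hji]; rewrite ?upd_eq ?upd_neq //; lia.
move=> x hx; rewrite hu //.
case: ifP => h1; case: ifP => h2 //.
- rewrite /U subr_le0; apply: (mono_le hv) => // j.
  by case: (eqVneq j i) => [->|hji]; rewrite ?upd_eq ?upd_neq //; lia.
- rewrite /U subr_ge0; apply: (mono_le hv) => // j.
  by case: (eqVneq j i) => [->|hji]; rewrite ?upd_eq ?upd_neq //; lia.
Qed.

Lemma rs_IC Aset : expost_IC_IR k v (random_sampling sel v Aset).
Proof.
move=> s hs i.
case: (boolP (i \in Aset)) => hi.
  have e : forall b, (random_sampling sel v Aset b).1 i = set0.
    by move=> b; apply: sel_out; rewrite inE hi.
  split; last move=> x _; rewrite /utility !e !(v_set0 hv) /= subrr //.
have e : forall x, sample_profile Aset (upd s i x) = sample_profile Aset s.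
  move=> x; apply/ffunP => j; rewrite !ffunE.
  case: (eqVneq j i) => [->|hji]; first by rewrite (negbTE hi).
  by [].
rewrite /utility /= /sample_vals; split.
  set a := v i _ s; have : 0 <= a by apply: (v_ge0 hv).
  lra.
by move=> x _; rewrite e.
Qed.

End IC.

Lemma sum_seq_ge0 (R : realFieldType) (r : seq nat) (h : nat -> R) :
  (forall y, y \in r -> 0 <= h y) -> 0 <= \sum_(y <- r) h y.
Proof. by move=> hp; rewrite big_seq; apply: sumr_ge0. Qed.

Lemma sum_seq_ge (R : realFieldType) (r : seq nat) x (h : nat -> R) :
  x \in r -> (forall y, y \in r -> 0 <= h y) -> h x <= \sum_(y <- r) h y.
Proof.
elim: r => [//|a r IH] /=; rewrite inE big_cons => hx hpos.
have hr : forall y, y \in r -> 0 <= h y by move=> y hy; apply: hpos; rewrite inE hy orbT.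
have ha : 0 <= h a by apply: hpos; rewrite inE eqxx.
have h0 := sum_seq_ge0 hr.
case/orP: hx => [/eqP ->|hx]; first lra.
have := IH hx hr; lra.
Qed.

Lemma level_ex (x K : nat) : (0 < x)%N -> (x < 2 ^ K)%N ->
  exists l, (l < K)%N /\ (2 ^ l <= x < 2 ^ l.+1)%N.
Proof.
move=> hx; elim: K => [|K IH] hK; first by move: hK hx; rewrite expn0 ltnS leqn0 => /eqP ->.
case: (ltnP x (2 ^ K)) => h.
  by case: (IH h) => l [hl hb]; exists l; split => //; lia.
by exists K; split => //; rewrite h hK.
Qed.

Section Approx.
Variables (R : realFieldType) (I M : finType) (K : nat) (v : valuations I M R).
Hypothesis hv : valid_valuations (2 ^ K) v.
Variable sel : {set I} -> (I -> {set M} -> R) -> allocation I M.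
Hypothesis hsel : welfare_maximizer sel.
Variable s : profile I.
Hypothesis hs : in_range (2 ^ K) s.
Variable A : allocation I M.
Hypothesis hA : feasible A.

Lemma welfare_ge_reduced (val : I -> {set M} -> R) B :
  (forall j T, val j T <= v j T s) -> welfare_of val B <= welfare v s B.
Proof. by move=> h; apply: ler_sum => j _; apply: h. Qed.

Lemma restrict_feasible (P : pred I) :
  feasible [ffun j => if P j then A j else set0].
Proof.
move=> i j hij; rewrite !ffunE.
case: (P i); case: (P j); rewrite -?setI_eq0 ?setI0 ?set0I //.
by rewrite setI_eq0; apply: hA.
Qed.

Lemma sel_ge S val (B : allocation I M) : feasible B -> supported_on S B ->
  welfare_of val B <= welfare_of val (sel S val).
Proof. by case: (hsel S val) => _ _ h; apply: h. Qed.

Definition W l := welfare v s (sel (bucket_set l s) (bucket_vals v l s)).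
Definition Al l : allocation I M :=
  [ffun j => if (2 ^ l.-1 <= s j < 2 ^ l)%N then A j else set0].

Lemma bucket_vals_ge0 l j T : 0 <= bucket_vals v l s j T.
Proof.
rewrite /bucket_vals; case: ifP => // _; apply: (v_ge0 hv).
by apply: in_range_le hs => i; apply: bucket_profile_le.
Qed.

Lemma bucket_vals_le l j T : bucket_vals v l s j T <= v j T s.
Proof.
rewrite /bucket_vals; case: ifP => _; last exact: (v_ge0 hv).
by apply: (mono_le hv) => // i; apply: bucket_profile_le.
Qed.

Lemma bucket_part :
  \sum_i (v i (A i) s - v i (A i) (upd s i 0))
    <= 2 * \sum_(l <- iota 1 K) W l.
Proof.
have step : forall i, v i (A i) s - v i (A i) (upd s i 0)
    <= 2 * \sum_(l <- iota 1 K) bucket_vals v l s i (Al l i).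
  move=> i.
  have hpos : forall y, y \in iota 1 K -> 0 <= bucket_vals v y s i (Al y i).
    by move=> y _; apply: bucket_vals_ge0.
  have h0 := sum_seq_ge0 hpos.
  case: (posnP (s i)) => hsi.
    have e : upd s i 0 = s by rewrite -[in LHS]hsi upd_id.
    by rewrite e subrr; lra.
  have hsk := proj1 (in_rangeP _ s) hs i.
  case: (level_ex hsi hsk) => l [hl hb].
  have hmem : l.+1 \in iota 1 K by rewrite mem_iota; lia.
  have := sum_seq_ge hmem hpos.
  rewrite /Al ffunE /= hb /bucket_vals inE /=.
  case/andP: (hb) => -> _.
  have := bucket_sos hv (A i) hs hb.
  lra.
apply: le_trans (ler_sum _ (fun i _ => step i)) _.
rewrite -mulr_sumr exchange_big /= ler_pM2l ?ltr0Sn //.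
apply: ler_sum => l _.
apply: le_trans (welfare_ge_reduced _ (bucket_vals_le l)).
apply: sel_ge.
  exact: restrict_feasible.
move=> j; rewrite inE -ltnNge => hj; rewrite ffunE.
by case/andP: (ifT _ _ _) || (rewrite ifF //; apply/negbTE; rewrite negb_and -ltnNge hj).
Qed.

Lemma sample_profile_le (S : {set I}) j : (sample_profile S s j <= s j)%N.
Proof. by rewrite ffunE; case: ifP. Qed.

Lemma rs_single j T :
  (2 ^ #|I|)%:R * v j T (upd s j 0)
    <= 4 * \sum_(S : {set I} | j \notin S) v j T (sample_profile S s).
Proof.
set F := fun S : {set I} => v j T (sample_profile S s).
set g := v j T (upd s j 0).
pose sig (S : {set I}) : {set I} := [set x | if x == j then x \in S else x \notin S].
have sigK : cancel sig sig.
  by move=> S; apply/setP => x; rewrite !inE; case: (x == j) => //; rewrite negbK.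
have sigj : forall S, (j \in sig S) = (j \in S) by move=> S; rewrite inE eqxx.
pose tau (S : {set I}) : {set I} := [set x | if x == j then x \notin S else x \in S].
have tauK : cancel tau tau.
  by move=> S; apply/setP => x; rewrite !inE; case: (x == j) => //; rewrite negbK.
have tauj : forall S, (j \in tau S) = (j \notin S) by move=> S; rewrite inE eqxx.
have e1 : \sum_(S : {set I} | j \notin S) F S = \sum_(S : {set I} | j \notin S) F (sig S).
  rewrite (reindex_inj (can_inj sigK)) /=.
  by apply: eq_bigl => S; rewrite sigj.
have pair : forall S : {set I}, j \notin S -> g <= F S + F (sig S).
  move=> S hS.
  have hle : forall x, (zerop I x <= sample_profile (sig S) s x)%N by move=> x; rewrite ffunE.
  have eb : addp (sample_profile (sig S) s) (sample_profile S s) = upd s j 0.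
    apply/ffunP => x; rewrite !ffunE !inE.
    case: (x =P j) => [->|_]; first by rewrite (negbTE hS).
    by case: (x \in S); rewrite ?addn0.
  have ea : addp (zerop I) (sample_profile S s) = sample_profile S s.
    by apply/ffunP => x; rewrite !ffunE add0n.
  have hr : in_range (2 ^ K) (upd s j 0).
    by apply: in_range_upd => //; rewrite expn_gt0.
  have := sos_add hv j T (c := sample_profile S s) hle.
  rewrite eb ea => /(_ hr).
  have : 0 <= v j T (zerop I).
    by apply: (v_ge0 hv); apply: in_range_le hr => x; rewrite ffunE.
  rewrite /F /g; lra.
have h2 : \sum_(S : {set I} | j \notin S) g <= 2 * \sum_(S : {set I} | j \notin S) F S.
  rewrite mulr2n mulrDl mul1r {2}e1 -big_split /=.
  by apply: ler_sum => S hS; apply: pair.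
have h3 : \sum_(S : {set I} | j \notin S) g = \sum_(S : {set I} | j \in S) g.
  rewrite (reindex_inj (can_inj tauK)) /=.
  by apply: eq_bigl => S; rewrite tauj negbK.
have h4 : \sum_(S : {set I}) g = g *+ (2 ^ #|I|)%N.
  rewrite sumr_const; congr (_ *+ _).
  by rewrite -cardsT -(card_powerset [set: I]) powersetT cardsT.
rewrite -mulr_natl in h4.
rewrite -h4 (bigID (fun S : {set I} => j \in S)) /= -h3.
move: h2; rewrite /F; lra.
Qed.

Lemma rs_part :
  (2 ^ #|I|)%:R * \sum_i v i (A i) (upd s i 0)
    <= 4 * \sum_(S : {set I}) welfare v s (sel (~: S) (sample_vals v S s)).
Proof.
have step : forall S : {set I},
    \sum_j (if j \notin S then v j (A j) (sample_profile S s) else 0)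
      <= welfare v s (sel (~: S) (sample_vals v S s)).
  move=> S.
  have sv_le : forall j T, sample_vals v S s j T <= v j T s.
    move=> j T; rewrite /sample_vals; case: ifP => _; last exact: (v_ge0 hv).
    by apply: (mono_le hv) => // x; apply: sample_profile_le.
  apply: le_trans (welfare_ge_reduced _ sv_le).
  have := @sel_ge (~: S) (sample_vals v S s) _ (restrict_feasible (fun j => j \in ~: S)).
  have hsup : supported_on (~: S) [ffun j => if j \in ~: S then A j else set0].
    by move=> j hj; rewrite ffunE (negbTE hj).
  move=> /(_ hsup); apply: le_trans; rewrite le_eqVlt; apply/orP; left; apply/eqP.
  apply: eq_bigr => j _; rewrite ffunE /sample_vals in_setC.
  by case: (j \in S) => //=; rewrite (v_set0 hv).
have step2 : \sum_(S : {set I}) \sum_j (if j \notin S then v j (A j) (sample_profile S s) else 0)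
    <= \sum_(S : {set I}) welfare v s (sel (~: S) (sample_vals v S s)).
  by apply: ler_sum => S _; apply: step.
apply: le_trans (ler_wpM2l _ step2); last by [].
rewrite exchange_big /= mulr_sumr mulr_sumr.
apply: ler_sum => j _.
rewrite -big_mkcond /=.
exact: rs_single.
Qed.

End Approx.

Lemma In_mem (T : eqType) (x : T) (r : seq T) : List.In x r -> x \in r.
Proof.
elim: r => [//|a r IH] /= [->|h]; rewrite inE; first by rewrite eqxx.
by rewrite IH // orbT.
Qed.

Lemma In_cat (T : Type) (x : T) (a b : seq T) :
  List.In x (a ++ b) -> List.In x a \/ List.In x b.
Proof.
elim: a => [|y a IH] /=; first by right.
case=> [->|h]; first by left; left.
by case: (IH h) => h'; [left; right | right].
Qed.

Lemma In_map (T U : Type) (f : T -> U) (x : U) (r : seq T) :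
  List.In x (map f r) -> exists y, f y = x /\ List.In y r.
Proof.
elim: r => [//|y r IH] /=.
case=> [<-|h]; first by exists y; split => //; left.
by case: (IH h) => z [e hz]; exists z; split => //; right.
Qed.

Theorem mainTheorem10 (R : realFieldType) (I M : finType) (K : nat)
    (hK : (0 < K)%N) (v : valuations I M R)
    (hv : valid_valuations (2 ^ K) v)
    (sel : {set I} -> (I -> {set M} -> R) -> allocation I M)
    (hsel : welfare_maximizer sel) :
  universally_expost_IC_IR (2 ^ K) v (kSS sel v K) /\
  (forall s : profile I, in_range (2 ^ K) s ->
     forall A : allocation I M, feasible A ->
       welfare v s A <= (2 * K + 4)%:R * expected_welfare v s (kSS sel v K)).
Proof.
split.
  move=> pm hpm; case: (In_cat hpm) => hin.
    case: (In_map hin) => x [e hx]; rewrite -e /=.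
    apply: (rb_IC hv hsel).
    move/In_mem: hx; rewrite mem_iota => /andP [h1 h2].
    by rewrite leq_exp2l //; lia.
  case: (In_map hin) => x [e hx]; rewrite -e /=.
  exact: (rs_IC hv hsel).
move=> s hs A hA.
rewrite /expected_welfare /kSS big_cat !big_map /= big_enum /=.
rewrite -!mulr_sumr.
have hb := bucket_part hv hsel hs hA.
have hr := rs_part hv hsel hs hA.
rewrite /W in hb.
have eY : \sum_(S in [set: {set I}]) welfare v s (sel (~: S) (sample_vals v S s))
    = \sum_(S : {set I}) welfare v s (sel (~: S) (sample_vals v S s)).
  by apply: eq_bigl => S; rewrite inE.
rewrite eY.
set X := \sum_(l <- iota 1 K) _ in hb *.
set Y := \sum_(S : {set I}) _ in hr *.
set N := ((2 ^ #|I|)%:R : R) in hr *.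
have hN : 0 < N by rewrite /N ltr0n expn_gt0.
have hK' : (K%:R : R) != 0 by rewrite pnatr_eq0 -lt0n.
have hK2 : ((K + 2)%:R : R) != 0 by rewrite pnatr_eq0 addn2.
have ew : welfare v s A = \sum_i (v i (A i) s - v i (A i) (upd s i 0))
    + \sum_i v i (A i) (upd s i 0).
  by rewrite -big_split; apply: eq_bigr => i _ /=; rewrite subrK.
rewrite ew.
set Tt := \sum_i (_ - _) in hb *.
set G := \sum_i v i (A i) (upd s i 0) in hr *.
have ec1 : (2 * K + 4)%:R * (K%:R / (K + 2)%:R / K%:R) = 2 :> R.
  rewrite (_ : (2 * K + 4)%N = 2 * (K + 2))%N; last by lia.
  rewrite natrM; field; rewrite hK' /=; by rewrite -natrD in hK2 *.
have ec2 : (2 * K + 4)%:R * (2 / (K + 2)%:R / N) * N = 4 :> R.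
  rewrite (_ : (2 * K + 4)%N = 2 * (K + 2))%N; last by lia.
  rewrite natrM; field; rewrite -/N (lt0r_neq0 hN) /=; by rewrite -natrD in hK2 *.
set c := (2 * K + 4)%:R * (2 / (K + 2)%:R / N) in ec2.
have hG : G <= c * Y.
  rewrite -(ler_pM2l hN) mulrA (mulrC N c) ec2.
  by [].
rewrite mulrDr mulrA ec1 mulrA -/c.
lra.
Qed.
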